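(* Let $G$ be a cyclic group of order $p^a$, where $p$ is an odd prime and $a \geq 1$. Then the power graph $\mathscr{G}(G)$ is overfull.
   Context: For a finite group $G$, the power graph $\mathscr{G}(G)$ is the simple graph with vertex set the elements of $G$, in which two distinct elements $a,b$ are adjacent if and only if one is a power of the other. For a finite simple graph $\Gamma$ on $n$ vertices with maximum vertex degree $\Delta(\Gamma)$, $\Gamma$ is called overfull if $|E(\Gamma)| / \lfloor n/2 \rfloor > \Delta(\Gamma)$. *)

(* Defs.v *)
From mathcomp Require Import all_boot all_order all_algebra all_fingroup.
Set Implicit Arguments. Unset Strict Implicit. Unset Printing Implicit Defensive.

Definition pg_adj (gT : finGroupType) (a b : gT) : bool :=
  (a != b) && ((a \in <[b]>%g) || (b \in <[a]>%g)).

Definition pg_edges (gT : finGroupType) (G : {group gT}) : {set {set gT}} :=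
  [set [set a; b] | a in G, b in G & pg_adj a b].

Definition pg_deg (gT : finGroupType) (G : {group gT}) (v : gT) : nat :=
  #|[set u in G | pg_adj u v]|.

Definition pg_maxdeg (gT : finGroupType) (G : {group gT}) : nat :=
  \max_(v in G) pg_deg G v.

Definition pg_overfull (gT : finGroupType) (G : {group gT}) : Prop :=
  ((pg_maxdeg G)%:R < (#|pg_edges G|)%:R / ((#|G|)./2)%:R :> rat)%R.

(* Main.v *)
Require Import Defs.
From mathcomp Require Import all_boot all_order all_algebra all_fingroup all_solvable.
Set Implicit Arguments. Unset Strict Implicit. Unset Printing Implicit Defensive.

Lemma complete_pg (gT : finGroupType) (G : {group gT}) (p a : nat) :
  prime p -> cyclic G -> #|G| = p ^ a ->
  forall x y, x \in G -> y \in G -> (x \in <[y]>%g) || (y \in <[x]>%g).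
Proof.
move=> pp cG oG.
suff H : forall x y, x \in G -> y \in G -> #[x]%g <= #[y]%g -> x \in <[y]>%g.
  move=> x y xG yG; case: (leqP #[x]%g #[y]%g) => h.
    by rewrite H.
  by rewrite orbC H // ltnW.
move=> x y xG yG le.
have /(dvdn_pfactor _ _ pp) [i _ ei] : #[x]%g %| p ^ a by rewrite -oG order_dvdG.
have /(dvdn_pfactor _ _ pp) [j _ ej] : #[y]%g %| p ^ a by rewrite -oG order_dvdG.
have ij : i <= j.
  by rewrite -(leq_exp2l _ _ (prime_gt1 pp)) -ei -ej.
have dv : #[x]%g %| #[y]%g by rewrite ei ej dvdn_exp2l.
have dv2 : #[y]%g %/ #[x]%g %| #[y]%g by apply: dvdn_div.
set z := (y ^+ (#[y]%g %/ #[x]%g))%g.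
have oz : #[z]%g = #[x]%g.
  rewrite /z orderXdiv // -{1}(divnK dv) mulKn //.
  by rewrite divn_gt0 ?order_gt0 // dvdn_leq ?order_gt0.
have sxG : <[x]>%g \subset G by rewrite cycle_subG.
have szG : <[z]>%g \subset G by rewrite cycle_subG groupX.
have e : (<[x]>%g :==: <[z]>%g).
  by rewrite (eq_subG_cyclic cG sxG szG); apply/eqP; exact: (esym oz).
have xz : x \in <[z]>%g by rewrite -(eqP e) cycle_id.
exact: (subsetP (cycleX y _) _ xz).
Qed.

Theorem mainTheorem6 (gT : finGroupType) (G : {group gT}) (p a : nat) :
  prime p -> odd p -> 1 <= a -> cyclic G -> #|G| = p ^ a ->
  pg_overfull G.
Proof.
move=> pp op a1 cG oG.
set n := #|G|.
have on : odd n by rewrite /n oG oddX op orbT.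
have n3 : 3 <= n.
  rewrite /n oG; apply: (leq_trans _ (leq_pexp2l (prime_gt0 pp) a1 : p ^ 1 <= p ^ a)) => //=.
    by rewrite expn1; move: (prime_gt1 pp) op; case: (p) => [|[|[|q]]].
have hdeg : pg_maxdeg G <= n.-1.
  apply/bigmax_leqP => v vG.
  rewrite /pg_deg /n (cardsD1 v G) vG add1n /=.
  apply: subset_leq_card; apply/subsetP => u; rewrite !inE => /andP[uG /andP[uv _]].
  by rewrite uv uG.
have hE : 'C(n, 2) <= #|pg_edges G|.
  rewrite -cards_draws; apply: subset_leq_card; apply/subsetP => B.
  rewrite inE => /andP[BG /cards2P [x [y [xy eB]]]].
  rewrite eB in BG *.
  have xG : x \in G by exact: (subsetP BG x (set21 x y)).
  have yG : y \in G by exact: (subsetP BG y (set22 x y)).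
  apply/imset2P; exists x y => //; rewrite inE yG /pg_adj xy /=.
  exact: (complete_pg pp cG oG).
rewrite /pg_overfull -/n.
have h0 : 0 < n./2 by rewrite -divn2 divn_gt0 // (leq_trans _ n3).
rewrite Num.Theory.ltr_pdivlMr ?Num.Theory.ltr0n // -GRing.natrM Num.Theory.ltr_nat.
apply: (leq_trans _ hE).
rewrite bin2odd //.
have -> : n.-1./2 = n./2 by rewrite -{1}(odd_double_half n) on add1n /= doubleK.
apply: (leq_ltn_trans (leq_mul hdeg (leqnn _))).
by rewrite ltn_pmul2r // prednK // (leq_trans _ n3).
Qed.
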